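(* Let $n\ge 2$ be odd. Then there exists no matching mechanism that is resolute, symmetric (i.e. $G^*$-symmetric) and minimally optimal.
   Context: Fix $n\ge 2$, $W=\{1,\dots,n\}$ (women), $M=\{n+1,\dots,2n\}$ (men), $I=W\cup M$. Permutations compose right-to-left. A preference profile is a function $p$ on $I$ assigning to each $x\in W$ a linear order $p(x)$ on $M$ and to each $y\in M$ a linear order $p(y)$ on $W$; $\mathcal{P}$ is the set of preference profiles. For a linear order $R$ on a set $X$ and $a\in X$, $\mathrm{Rank}_R(a)=|\{b\in X: b\succeq_R a\}|$. A matching is a permutation $\mu$ of $I$ with $\mu(W)=M$, $\mu(M)=W$ and $\mu(\mu(z))=z$ for all $z\in I$; $\mathcal{M}$ is the set of matchings. $\mu$ is minimally optimal for $p$ if there is $z\in I$ with $\mathrm{Rank}_{p(z)}(\mu(z))<n$. Let $G^*=\{\varphi\in\mathrm{Sym}(I):\{\varphi(W),\varphi(M)\}=\{W,M\}\}$. For a linear order $R$ on $X\subseteq I$ and $\varphi\in\mathrm{Sym}(I)$, $\varphi R$ is the relation on $\varphi(X)$ with $(a,b)\in\varphi R$ iff $(\varphi^{-1}(a),\varphi^{-1}(b))\in R$. For $p\in\mathcal{P}$, $\varphi\in G^*$, $p^\varphi(z)=\varphi\,p(\varphi^{-1}(z))$. For a permutation $\mu$, $\mu^\varphi=\varphi\mu\varphi^{-1}$; $S^\varphi=\{\mu^\varphi:\mu\in S\}$. A matching mechanism is a correspondence $F$ from $\mathcal{P}$ to $\mathcal{M}$; it is resolute if $|F(p)|=1$ for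 all $p$; minimally optimal if every $\mu\in F(p)$ is minimally optimal for $p$, for all $p$; symmetric if $F(p^\varphi)=F(p)^\varphi$ for all $p\in\mathcal{P}$, $\varphi\in G^*$. *)

(* Defs.v *)
(* Agents are 'I_(n + n): women = {i | i < n}, men = {i | n <= i}
   (a relabelling of {1..n} and {n+1..2n} by the shift i |-> i+1). *)
From mathcomp Require Import all_boot all_fingroup.
Set Implicit Arguments. Unset Strict Implicit. Unset Printing Implicit Defensive.

Section Defs.
Variable n : nat.

Definition agent := 'I_(n + n).
Definition Women : {set agent} := [set i : agent | i < n].
Definition Men : {set agent} := [set i : agent | n <= i].

(* A relation on a set X is a set of pairs; (a, b) \in R reads "a is weakly
   preferred to b" (a >=_R b). *)
Definition linear_order (X : {set agent}) (R : {set agent * agent}) : Prop :=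
  [/\ R \subset setX X X,
      forall a, a \in X -> (a, a) \in R,
      forall a b, (a, b) \in R -> (b, a) \in R -> a = b,
      forall a b c, (a, b) \in R -> (b, c) \in R -> (a, c) \in R
    & forall a b, a \in X -> b \in X -> (a, b) \in R \/ (b, a) \in R].

Definition profile := {ffun agent -> {set agent * agent}}.

Definition is_profile (p : profile) : Prop :=
  (forall x, x \in Women -> linear_order Men (p x)) /\
  (forall y, y \in Men -> linear_order Women (p y)).

Definition Rank (R : {set agent * agent}) (a : agent) : nat :=
  #|[set b : agent | (b, a) \in R]|.

Definition matching (mu : {perm agent}) : Prop :=
  [/\ mu @: Women = Men, mu @: Men = Women & forall z, mu (mu z) = z].

Definition minimally_optimal_for (p : profile) (mu : {perm agent}) : Prop :=
  exists z : agent, Rank (p z) (mu z) < n.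

Definition Gstar (phi : {perm agent}) : Prop :=
  [set phi @: Women; phi @: Men] = [set Women; Men].

Definition act_rel (phi : {perm agent}) (R : {set agent * agent}) :
  {set agent * agent} :=
  [set u : agent * agent | ((phi^-1)%g u.1, (phi^-1)%g u.2) \in R].

Definition act_profile (phi : {perm agent}) (p : profile) : profile :=
  [ffun z => act_rel phi (p ((phi^-1)%g z))].

(* mu^phi = phi o mu o phi^-1 (right-to-left composition); in MathComp's
   perm group (s * t) x = t (s x), so this is the conjugate (mu ^ phi)%g. *)
Definition act_match (phi : {perm agent}) (mu : {perm agent}) : {perm agent} :=
  (mu ^ phi)%g.

Definition act_matchset (phi : {perm agent}) (S : {set {perm agent}}) :
  {set {perm agent}} := [set act_match phi mu | mu in S].

Definition mechanism := profile -> {set {perm agent}}.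

Definition is_mechanism (F : mechanism) : Prop :=
  forall p, is_profile p -> forall mu, mu \in F p -> matching mu.

Definition Resolute (F : mechanism) : Prop :=
  forall p, is_profile p -> #|F p| = 1.

Definition MinOptimal (F : mechanism) : Prop :=
  forall p, is_profile p -> forall mu, mu \in F p -> minimally_optimal_for p mu.

Definition Gsymmetric (F : mechanism) : Prop :=
  forall p phi, is_profile p -> Gstar phi ->
    F (act_profile phi p) = act_matchset phi (F p).

End Defs.

(* Main.v *)
Require Import Defs.
From mathcomp Require Import all_boot all_fingroup.
From mathcomp Require Import zify.
Set Implicit Arguments. Unset Strict Implicit. Unset Printing Implicit Defensive.

Ltac des := repeat match goal with
 | |- context [if ?b then _ else _] =>
     lazymatch b with context [if _ then _ else _] => fail | _ => case: (boolP b) => ? end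
 end.

Definition phin (n : nat) (a : nat) : nat :=
  if a < n then a + n else if a.+1 == n + n then 0 else a - n + 1.
Definition phiinvn (n : nat) (a : nat) : nat :=
  if n <= a then a - n else if a == 0 then n + n - 1 else a + n - 1.

Lemma phin_lt n (a : agent n) : phin n a < n + n.
Proof. case: a => a /= Ha; rewrite /phin; des; lia. Qed.
Lemma phiinvn_lt n (a : agent n) : phiinvn n a < n + n.
Proof. case: a => a /= Ha; rewrite /phiinvn; des; lia. Qed.

Definition phif n (a : agent n) : agent n := Ordinal (phin_lt a).
Definition phiinvf n (a : agent n) : agent n := Ordinal (phiinvn_lt a).

Lemma phiK n : cancel (@phif n) (@phiinvf n).
Proof. move=> [a Ha]; apply: val_inj => /=; rewrite /phin; des; rewrite /phiinvn; des; lia. Qed.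

Definition phi n : {perm agent n} := perm (can_inj (@phiK n)).

Lemma phiE n (a : agent n) : val (phi n a) = phin n a.
Proof. by rewrite permE. Qed.

Lemma phi_side n (a : agent n) : (phi n a < n) = ~~ (a < n).
Proof. rewrite phiE /phin; case: a => a Ha /=; des; lia. Qed.

Definition pos n (a : agent n) : nat := if a < n then 2 * a else 2 * (a - n) + 1.

Lemma pos_lt n (a : agent n) : pos a < n + n.
Proof. case: a => a Ha; rewrite /pos /=; des; lia. Qed.

Lemma pos_inj n : injective (@pos n).
Proof. move=> [a Ha] [b Hb]; rewrite /pos /= => H; apply: val_inj => /=; move: H; des; lia. Qed.

Lemma pos_phi n (a : agent n) : pos (phi n a) = (pos a + 1) %% (n + n).
Proof.
have := pos_lt a; case: (ltnP (pos a + 1) (n + n)) => H _.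
- rewrite modn_small //; move: H; rewrite /pos phiE /phin; case: a => a Ha /=; des; lia.
- have -> : pos a + 1 = n + n by have := pos_lt a; lia.
  rewrite modnn; move: H; rewrite /pos phiE /phin; case: a => a Ha /=; des; lia.
Qed.

Definition key n (z a : agent n) : nat :=
  (pos a + (n + n - pos z + (n - 1))) %% (n + n).

Definition opp n (z a : agent n) : bool := (a < n) != (z < n).

Definition prof n : profile n :=
  [ffun z => [set u : agent n * agent n |
      [&& opp z u.1, opp z u.2 & key z u.1 <= key z u.2]]].

Lemma opp_phi n (z a : agent n) : opp (phi n z) (phi n a) = opp z a.
Proof. by rewrite /opp !phi_side; case: (a < n); case: (z < n). Qed.

Lemma key_phi n (z a : agent n) : key (phi n z) (phi n a) = key z a.
Proof.
rewrite /key !pos_phi; move: (pos_lt a) (pos_lt z); move: (pos a) (pos z) => x y hx hy.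
case: (ltnP (x + 1) (n + n)) => h1; case: (ltnP (y + 1) (n + n)) => h2.
- rewrite !(modn_small h1) !(modn_small h2); congr (_ %% _); lia.
- rewrite (modn_small h1) (_ : y + 1 = n + n) ?modnn; last lia.
  have -> : x + (n + n - y + (n - 1)) = (x + 1 + (n + n - 0 + (n - 1))) - (n + n) by lia.
  rewrite (_ : x + 1 + (n + n - 0 + (n - 1)) = (x + 1 + (n - 1)) + (n + n)); last lia.
  rewrite modnDr (_ : x + 1 + (n - 1) + (n + n) - (n + n) = x + 1 + (n-1)); last lia.
  by [].
- rewrite (modn_small h2) (_ : x + 1 = n + n) ?modnn; last lia.
  have -> : x + (n + n - y + (n - 1)) = (0 + (n + n - (y + 1) + (n - 1))) + (n + n) by lia.
  by rewrite modnDr.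
- rewrite (_ : x + 1 = n + n) ?modnn; last lia.
  rewrite (_ : y + 1 = n + n) ?modnn; last lia.
  have -> : x + (n + n - y + (n - 1)) = (0 + (n + n - 0 + (n - 1))) by lia.
  by [].
Qed.

Lemma prof_lin n (z : agent n) : linear_order [set a | opp z a] (prof n z).
Proof.
split.
- by apply/subsetP => -[a b]; rewrite ffunE in_setX !inE => /and3P [-> -> _].
- by move=> a; rewrite ffunE !inE /= => ->; rewrite leqnn.
- move=> a b; rewrite ffunE !inE /= => /and3P [ha hb h1] /and3P [_ _ h2].
  have : key z a == key z b by rewrite eqn_leq h1 h2.
  rewrite /key eqn_modDr (modn_small (pos_lt a)) (modn_small (pos_lt b)).
  by move/eqP; apply: pos_inj.
- move=> a b c; rewrite !ffunE !inE /= => /and3P [ha hb h1] /and3P [_ hc h2].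
  by rewrite ha hc (leq_trans h1 h2).
- move=> a b; rewrite !inE ffunE !inE /= => ha hb; rewrite ha hb /=.
  by case: (leqP (key z a) (key z b)) => h; [left | right; apply: ltnW].
Qed.

Lemma oppW n (z : agent n) : z \in Women n -> [set a | opp z a] = Men n.
Proof. rewrite inE => hz; apply/setP => a; rewrite !inE /opp hz; lia. Qed.
Lemma oppM n (z : agent n) : z \in Men n -> [set a | opp z a] = Women n.
Proof. rewrite inE => hz; apply/setP => a; rewrite !inE /opp; lia. Qed.

Lemma prof_ok n : is_profile (prof n).
Proof.
split=> x hx; [rewrite -(oppW hx) | rewrite -(oppM hx)]; exact: prof_lin.
Qed.

Lemma phiW n : phi n @: Women n = Men n.
Proof.
apply/setP => b; rewrite inE; apply/imsetP/idP.
- by case=> a; rewrite inE => ha ->; rewrite leqNgt phi_side ha.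
- move=> hb; exists (((phi n)^-1)%g b); last by rewrite permKV.
  by move: hb; rewrite inE -{1}(permKV (phi n) b) leqNgt phi_side negbK.
Qed.

Lemma phiM n : phi n @: Men n = Women n.
Proof.
apply/setP => b; rewrite inE; apply/imsetP/idP.
- by case=> a; rewrite inE => ha ->; rewrite phi_side -leqNgt.
- move=> hb; exists (((phi n)^-1)%g b); last by rewrite permKV.
  by move: hb; rewrite inE -{1}(permKV (phi n) b) phi_side leqNgt negbK.
Qed.

Lemma phiG n : Gstar (phi n).
Proof. by rewrite /Gstar phiW phiM setUC. Qed.

Lemma prof_fix n : act_profile (phi n) (prof n) = prof n.
Proof.
apply/ffunP => z; rewrite !ffunE; apply/setP => [[a b]]; rewrite /act_rel !inE /=.
by rewrite -[in RHS](permKV (phi n) a) -[in RHS](permKV (phi n) b)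
  -[in RHS](permKV (phi n) z) !opp_phi !key_phi.
Qed.

Lemma cardW n : #|Women n| = n.
Proof.
have h1 : #|phi n @: Women n| = #|Women n| by apply: card_imset; apply: perm_inj.
rewrite phiW in h1.
have h2 : ~: Women n = Men n by apply/setP => a; rewrite !inE -leqNgt.
have := cardsC (Women n); rewrite h2 h1 card_ord; lia.
Qed.

Lemma cardM n : #|Men n| = n.
Proof.
have h1 : #|phi n @: Women n| = #|Women n| by apply: card_imset; apply: perm_inj.
by rewrite phiW cardW in h1.
Qed.

Theorem theorem4 (n : nat) (hn : 2 <= n) (hodd : odd n) :
  ~ exists F : mechanism n,
      [/\ is_mechanism F, Resolute F, Gsymmetric F & MinOptimal F].
Proof.
case=> F [Fm Fr Fs Fo].
have n0 : 0 < n + n by lia.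
have pP := prof_ok n.
have [mu Fp] : exists mu, F (prof n) = [set mu] by apply/cards1P; rewrite Fr.
have := Fs _ _ pP (phiG n); rewrite prof_fix Fp /act_matchset imset_set1 => /set1_inj hmu.
have comm : forall x, mu (phi n x) = phi n (mu x).
  by move=> x; rewrite {1}hmu /act_match conjgE !permM permK.
have [muW muM muK] : matching mu by apply: (Fm _ pP); rewrite Fp set11.
pose w0 : agent n := Ordinal n0.
have w0W : w0 \in Women n by rewrite inE /=; lia.
have mw0 : mu w0 \in Men n by rewrite -muW; apply: imset_f.
pose c := pos (mu w0).
have hc : forall k, k < n + n -> forall a, pos a = k -> pos (mu a) = (k + c) %% (n + n).
  elim=> [|k IH] hk a ha.
  - have -> : a = w0.
      by apply: val_inj; move: ha; rewrite /pos /=; case: a => a Ha /=; des; lia.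
    by rewrite add0n modn_small // /c pos_lt.
  - have e : a = phi n (((phi n)^-1)%g a) by rewrite permKV.
    have hb : pos (((phi n)^-1)%g a) = k.
      move: ha; rewrite {1}e pos_phi; have := pos_lt (((phi n)^-1)%g a).
      move: (pos _) => x hx.
      case: (ltnP (x + 1) (n + n)) => h; first by rewrite modn_small //; lia.
      by rewrite (_ : x + 1 = n + n) ?modnn //; lia.
    rewrite e comm pos_phi (IH _ _ hb); last lia.
    by rewrite modnDml addnAC addn1.
have hmu2 : forall a, pos (mu a) = (pos a + c) %% (n + n).
  by move=> a; apply: hc => //; apply: pos_lt.
have cn : c = n.
  have hc0 : pos w0 = 0 by rewrite /pos /=; des; lia.
  have codd : odd c.
    by move: mw0; rewrite /c inE /pos; case: (mu w0) => x Hx /=; des; rewrite ?oddD ?oddM /=; lia.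
  have := hmu2 (mu w0); rewrite muK hc0 -/c => h.
  have clt : c < n + n by apply: pos_lt.
  case: (ltnP (c + c) (n + n)) => h2.
  - by move: h; rewrite modn_small //; lia.
  - move: h; rewrite (_ : c + c = (c + c - (n + n)) + (n + n)); last lia.
    by rewrite modnDr modn_small; lia.
have [z hz] : minimally_optimal_for (prof n) mu by apply: (Fo _ pP); rewrite Fp set11.
move: hz; rewrite ffunE /Rank; apply/negP; rewrite -leqNgt.
have hopp : opp z (mu z).
  rewrite /opp; case: (boolP (z < n)) => hzn.
  - have : mu z \in Men n by rewrite -muW; apply: imset_f; rewrite inE.
    by rewrite inE; lia.
  - have : mu z \in Women n by rewrite -muM; apply: imset_f; rewrite inE; lia.
    by rewrite inE; lia.
have hX : #|[set a | opp z a]| = n.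
  case: (boolP (z < n)) => hzn.
  - by rewrite oppW ?cardM // inE.
  - by rewrite oppM ?cardW // inE; lia.
rewrite -{1}hX; apply: subset_leq_card; apply/subsetP => b; rewrite !inE => hb.
rewrite ?ffunE ?inE /= hb hopp /=.
have -> : key z (mu z) = n + n - 1.
  rewrite /key hmu2 cn modnDml.
  have := pos_lt z; move: (pos z) => x hx.
  rewrite (_ : x + n + (n + n - x + (n - 1)) = (n + n - 1) + (n + n)); last lia.
  by rewrite modnDr modn_small //; lia.
have := ltn_pmod (pos b + (n + n - pos z + (n - 1))) n0; rewrite /key; lia.
Qed.
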